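(* Let $d\ge 3$ and $h\ge 1$ be integers, and let $G(d,h)$ be the sandpile group of the $d$-valent tree of depth $h$. Then the rank of $G(d,h)$ (the minimal number of generators of this finite abelian group) is $(d-1)^h$.
   Context: Let $\mathcal{T}(d,h)$ be the ball of radius $h$ about a fixed vertex $0$ (the root) in the infinite $d$-regular tree, i.e. the rooted tree in which the root has $d$ children, every vertex at distance $1,\dots,h-1$ from the root has $d-1$ children, and the vertices at distance $h$ (the leaves) have no children. Let $V$ be its vertex set and $A$ its adjacency matrix. Let $\Delta := dI - A$, let $\delta_i\in\mathbb{Z}^V$ ($i\in V$) be the rows of $\Delta$, and let $\Lambda\subset\mathbb{Z}^V$ be the lattice they span. The sandpile group is $G(d,h) := \mathbb{Z}^V/\Lambda$ (a finite abelian group). *)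

(* Defs.v *)
From HB Require Import structures.
From mathcomp Require Import all_boot all_order all_algebra.
Set Implicit Arguments. Unset Strict Implicit. Unset Printing Implicit Defensive.
Import Order.TTheory GRing.Theory Num.Theory.
Local Open Scope ring_scope.

(* A vertex of the ball T(d,h) is the word (path from the root) of length
   k <= h: its first letter is in {0..d-1} (the d children of the root),
   subsequent letters are in {0..d-2} (the d-1 children of a non-root vertex). *)
Definition word (d h : nat) := {k : 'I_h.+1 & k.-tuple 'I_d}.

Definition wseq d h (w : word d h) : seq 'I_d := val (tagged w).

Definition valid_word d h (w : word d h) : bool :=
  all (fun x : 'I_d => (x < d.-1)%N) (behead (wseq w)).

Definition vertex (d h : nat) := {w : word d h | valid_word w}.

Definition vseq d h (v : vertex d h) : seq 'I_d := wseq (val v).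

Definition is_child d h (u v : vertex d h) : bool :=
  (size (vseq v) == (size (vseq u)).+1) && (take (size (vseq u)) (vseq v) == vseq u).

Definition adj d h (u v : vertex d h) : bool := is_child u v || is_child v u.

Definition delta d h (u : vertex d h) : vertex d h -> int :=
  fun v => (d%:Z * (u == v)%:Z - (adj u v)%:Z)%R.

(* G(d,h) = Z^V / Lambda is generated by r elements: there are g_1..g_r in Z^V
   such that every x in Z^V is congruent mod Lambda to an integer combination
   of the g_i. *)
Definition sandpile_generated_by d h (r : nat) : Prop :=
  exists g : 'I_r -> vertex d h -> int,
    forall x : vertex d h -> int,
      exists (c : 'I_r -> int) (l : vertex d h -> int),
        forall j : vertex d h,
          x j = \sum_(i < r) c i * g i j + \sum_(u : vertex d h) l u * delta u j.

Definition sandpile_rank_is d h (n : nat) : Prop :=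
  sandpile_generated_by d h n /\ forall r, sandpile_generated_by d h r -> (n <= r)%N.

(* Main.v *)
Require Import Defs.
From mathcomp Require Import all_boot all_order all_algebra zify ring.
Set Implicit Arguments. Unset Strict Implicit. Unset Printing Implicit Defensive.
Import Order.TTheory GRing.Theory Num.Theory.

Definition vn d h (v : vertex d h) : seq nat := map val (vseq v).
Definition vs d h (s : seq nat) : bool :=
  [&& size s <= h, all (fun x => x < d) (take 1 s) & all (fun x => x < d.-1) (behead s)].

Lemma vn_inj d h : injective (@vn d h).
Proof.
case=> [[k t] pu] [[k' t'] pv]; rewrite /vn /vseq /wseq /= => /(inj_map val_inj) H.
have Ek : k = k' by apply: val_inj; rewrite /= -(size_tuple t) -(size_tuple t') H.
subst k'. have Et : t = t' by apply: val_inj.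
subst t'. by rewrite (bool_irrelevance pu pv).
Qed.

Lemma vn_vs d h (v : vertex d h) : vs d h (vn v).
Proof.
case: v => [[k t] pv]; rewrite /vs /vn /vseq /wseq /=.
rewrite size_map size_tuple -ltnS ltn_ord /=.
apply/andP; split.
  by rewrite -map_take all_map; apply/allP => x _ /=.
by rewrite behead_map all_map.
Qed.

Lemma vs_all d h s : vs d h s -> all (fun x => x < d) s.
Proof.
case: s => [|a s] //= /and3P [_ /andP [Ha _] Hs]; rewrite Ha /=.
apply: sub_all Hs => x /= Hx; apply: leq_trans Hx _; exact: leq_pred.
Qed.

Lemma pmap_insub_id d (s : seq nat) : all (fun x => x < d) s ->
  map val (pmap (insub : nat -> option 'I_d) s) = s.
Proof. by elim: s => //= a s IH /andP [Ha Hs]; rewrite insubT /= IH. Qed.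

Lemma vs_ex d h s : vs d h s -> exists v : vertex d h, vn v = s.
Proof.
move=> Hs; have Ha := vs_all Hs.
set ts := pmap (insub : nat -> option 'I_d) s.
have Hts : map val ts = s by exact: pmap_insub_id.
have Hk : size ts < h.+1 by rewrite -(size_map val) Hts ltnS; case/and3P: Hs.
pose k : 'I_h.+1 := Ordinal Hk.
have Ht : size ts == k by [].
pose w : word d h := existT _ k (Tuple Ht).
have Hw : valid_word w.
  rewrite /valid_word /wseq /=.
  case/and3P: Hs => _ _; rewrite -Hts behead_map all_map; exact.
exists (exist _ w Hw); by rewrite /vn /vseq /wseq /=.
Qed.

Definition root d h : vertex d h := exist _ (existT _ ord0 [tuple]) (erefl true).
Lemma vn_root d h : vn (root d h) = [::]. Proof. by []. Qed.

Definition mkv d h (s : seq nat) : vertex d h := odflt (root d h) [pick v | vn v == s].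
Lemma mkvK d h s : vs d h s -> vn (mkv d h s) = s.
Proof.
move=> /vs_ex [v Hv]; rewrite /mkv; case: pickP => [w /eqP //|/(_ v)].
by rewrite Hv eqxx.
Qed.

Lemma is_childE d h (u v : vertex d h) :
  is_child u v = (size (vn v) == (size (vn u)).+1) && (take (size (vn u)) (vn v) == vn u).
Proof.
by rewrite /is_child /vn !size_map -map_take (inj_eq (inj_map val_inj)).
Qed.

Lemma all_take' (T : Type) (P : pred T) k (s : seq T) : all P s -> all P (take k s).
Proof. elim: s k => [|a s IH] [|k] //= /andP [-> Hs] /=; exact: IH. Qed.

Lemma vs_take d h s k : vs d h s -> vs d h (take k s).
Proof.
case/and3P => H1 H2 H3; apply/and3P; split.
- rewrite size_take; case: ifP => // Hk; exact: leq_trans (ltnW Hk) H1.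
- case: k => [|k]; first by rewrite take0. by rewrite take_takel.
- case: s H3 {H1 H2} => [|a s] /=; first by [].
  case: k => [|k] //= H; exact: all_take'.
Qed.

Lemma vs_rcons d h s a : vs d h s -> size s < h ->
  (if s is [::] then a < d else a < d.-1) -> vs d h (rcons s a).
Proof.
case: s => [|b s] /and3P [H1 H2 H3] Hs Ha; apply/and3P; split => //=.
all: try by rewrite andbT.
all: try by rewrite size_rcons.
all: try by rewrite -cats1 all_cat H3 /= Ha.
all: by move: H2; rewrite /= !take0.
Qed.

Lemma seq_rcons_last (s : seq nat) n : size s = n.+1 -> s = rcons (take n s) (last 0%N s).
Proof.
move=> Hs; move: Hs; case/lastP: s => [|s a] //; rewrite size_rcons => -[E].
by rewrite last_rcons -E -cats1 take_size_cat // cats1.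
Qed.

Lemma take_rcons_size (s : seq nat) a : take (size s) (rcons s a) = s.
Proof. by rewrite -cats1 take_size_cat. Qed.

Lemma child_vn d h (u j : vertex d h) : is_child u j -> vn j = rcons (vn u) (last 0%N (vn j)).
Proof.
rewrite is_childE => /andP [/eqP Hs /eqP Ht].
by rewrite {1}(seq_rcons_last Hs) Ht.
Qed.

Local Open Scope ring_scope.

Lemma child_sum d h (u : vertex d h) (f : seq nat -> int) (a0 : nat) (K : int) :
  (forall a, f (rcons (vn u) a) = if a == a0 then K else 0) ->
  \sum_j f (vn j) * (is_child u j)%:Z = if vs d h (rcons (vn u) a0) then K else 0.
Proof.
move=> Hf; case: ifP => Hv.
- pose j0 := mkv d h (rcons (vn u) a0).
  have Hj0 : vn j0 = rcons (vn u) a0 by exact: mkvK.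
  have Cj0 : is_child u j0 by rewrite is_childE Hj0 size_rcons eqxx take_rcons_size eqxx.
  rewrite (bigD1 j0) //= Cj0 Hj0 Hf eqxx mulr1 big1 ?addr0 // => j Hj.
  case Cj: (is_child u j); last by rewrite mulr0.
  rewrite (child_vn Cj) Hf; case: eqP => [E|]; last by rewrite mul0r.
  by move: Hj; rewrite -(inj_eq (@vn_inj d h)) (child_vn Cj) Hj0 E eqxx.
- apply: big1 => j _.
  case Cj: (is_child u j); last by rewrite mulr0.
  rewrite (child_vn Cj) Hf; case: eqP => [E|]; last by rewrite mul0r.
  by move: (vn_vs j); rewrite (child_vn Cj) E Hv.
Qed.

Lemma parent_sum d h (u : vertex d h) (f : seq nat -> int) :
  \sum_j f (vn j) * (is_child j u)%:Z =
  if vn u == [::] then 0 else f (take (size (vn u)).-1 (vn u)).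
Proof.
case: eqP => Hu.
  by apply: big1 => j _; rewrite is_childE Hu /= mulr0.
have Hsz : (0 < size (vn u))%N by case: (vn u) Hu.
pose p := mkv d h (take (size (vn u)).-1 (vn u)).
have Hp : vn p = take (size (vn u)).-1 (vn u) by apply: mkvK; apply: vs_take; apply: vn_vs.
have Hps : size (vn p) = (size (vn u)).-1.
  by rewrite Hp size_take; case: (size (vn u)) Hsz => //= n _; rewrite ltnSn.
have Cp : is_child p u by rewrite is_childE Hps (prednK Hsz) eqxx Hp eqxx.
rewrite (bigD1 p) //= Cp Hp mulr1 big1 ?addr0 // => j Hj.
case Cj: (is_child j u); last by rewrite mulr0.
move: Cj; rewrite is_childE => /andP [/eqP Hs /eqP Ht].
move: Hj; rewrite -(inj_eq (@vn_inj d h)) Hp -Ht Hs /= eqxx //.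
Qed.

Fixpoint gs (s : seq nat) : int :=
  match s with
  | [::] => 1
  | [:: _] => 0
  | _ :: b :: s' => if b == 0%N then - gs s' else 0
  end.

Lemma gs_odd_gen n s : (size s <= n)%N -> odd (size s) -> gs s = 0.
Proof.
elim: n s => [|n IH] [|a [|b s]] //= Hs Ho.
rewrite IH ?oppr0 ?if_same //; first by apply: leq_trans (leqnSn _) _; exact: Hs.
by move: Ho; rewrite negbK.
Qed.

Lemma gs_odd s : odd (size s) -> gs s = 0.
Proof. exact: gs_odd_gen. Qed.

Lemma gs_cat_gen n s t : (size s <= n)%N -> ~~ odd (size s) -> gs (s ++ t) = gs s * gs t.
Proof.
elim: n s => [|n IH] [|a [|b s]] //= Hs Ho; rewrite ?mul1r //.
case: eqP => _; last by rewrite mul0r.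
rewrite IH ?mulNr //; first by apply: leq_trans (leqnSn _) _; exact: Hs.
by move: Ho; rewrite negbK.
Qed.

Lemma gs_cat s t : ~~ odd (size s) -> gs (s ++ t) = gs s * gs t.
Proof. exact: gs_cat_gen. Qed.

Lemma gs_last_gen n s : (size s <= n)%N -> gs s != 0 -> s != [::] -> last 0%N s = 0%N.
Proof.
elim: n s => [|n IH] [|a [|b s]] //= Hs; rewrite ?eqxx //.
case: (b =P 0%N) => [-> | _]; last by rewrite eqxx.
rewrite oppr_eq0 => Hg _.
case: s Hs Hg => [|c s] //= Hs Hg.
apply: (IH (c :: s)) => //; exact: ltnW Hs.
Qed.

Lemma gs_last s : gs s != 0 -> s != [::] -> last 0%N s = 0%N.
Proof. exact: gs_last_gen. Qed.

Definition sig (x y : seq nat) : int := if prefix x y then gs (drop (size x) y) else 0.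

Lemma sig_cat x s : sig x (x ++ s) = gs s.
Proof. by rewrite /sig prefix_prefix drop_size_cat. Qed.

Lemma sig_np x y : ~~ prefix x y -> sig x y = 0.
Proof. by rewrite /sig => /negbTE ->. Qed.

Lemma prefix_rcons_not (x s : seq nat) a :
  prefix x (rcons s a) -> ~~ prefix x s -> x = rcons s a.
Proof.
move=> /prefixP [t E] Hn; case/lastP: t E => [|t b]; first by rewrite cats0.
rewrite -rcons_cat => /rcons_inj [E _].
by move: Hn; rewrite E prefix_prefix.
Qed.

Lemma adjZ d h (u j : vertex d h) : (adj u j)%:Z = (is_child u j)%:Z + (is_child j u)%:Z.
Proof.
rewrite /adj; case C1: (is_child u j); case C2: (is_child j u) => //.
move: C1 C2; rewrite !is_childE => /andP [/eqP E1 _] /andP [/eqP E2 _].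
lia.
Qed.

Lemma size_prefix (x y : seq nat) : prefix x y -> (size x <= size y)%N.
Proof. by move/prefixP => [s ->]; rewrite size_cat leq_addr. Qed.

Lemma sig_adj d h (x : seq nat) (u : vertex d h) : (1 < d)%N -> vs d h x ->
  odd (size x) = odd h ->
  \sum_j sig x (vn j) * (adj u j)%:Z = ((x != [::]) && (vn u == take (size x).-1 x))%:Z.
Proof.
move=> Hd Hx Hpar.
under eq_bigr do rewrite adjZ mulrDr.
rewrite big_split /= parent_sum.
have Hu := vn_vs u.
case Hp: (prefix x (vn u)).
- have -> : ((x != [::]) && (vn u == take (size x).-1 x)) = false.
    apply/negbTE/negP => /andP [Hx0 /eqP E].
    have := size_prefix Hp; rewrite E size_take.
    case: x Hx0 {Hp E Hx Hpar} => [|a x'] //= _; rewrite ltnSn; lia.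
  move/prefixP: Hp => [s Es].
  case/lastP: s Es => [|s c] Es.
  + rewrite cats0 in Es.
    rewrite (@child_sum _ _ _ _ 0%N 0); last first.
      by move=> a; rewrite Es -cats1 sig_cat /= if_same.
    rewrite if_same add0r; case: (vn u =P [::]) => // Hne.
    rewrite sig_np // Es; apply/negP => /size_prefix; rewrite size_take.
    case: x Es {Hx Hpar} => [|a x] //= Es; rewrite ltnSn; lia.
  + have Htk : take (size (vn u)).-1 (vn u) = x ++ s.
      by rewrite Es -rcons_cat size_rcons /= take_rcons_size.
    have Hne : (vn u == [::]) = false.
      by apply/eqP => /(congr1 size); rewrite Es size_cat size_rcons /=; lia.
    rewrite Hne Htk sig_cat.
    case: (boolP (odd (size s))) => Ho.
    * rewrite (@child_sum _ _ _ _ 0%N 0); last first.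
        move=> a; rewrite Es -rcons_cat -!cats1 -!catA sig_cat /= gs_odd ?if_same //.
        by rewrite size_cat /= addn2 /= negbK.
      by rewrite gs_odd //; case: ifP.
    * rewrite (@child_sum _ _ _ _ 0%N (- gs s)); last first.
        move=> a; rewrite Es -rcons_cat -!cats1 -!catA sig_cat /= gs_cat //=.
        by case: eqP => _; rewrite ?mulrN1 ?mulr0.
      have -> : vs d h (rcons (vn u) 0%N).
        apply: vs_rcons => //.
          rewrite ltn_neqAle; case/and3P: Hu => -> _ _; rewrite andbT.
          apply/negP => /eqP Eh; move: Hpar; rewrite -Eh Es !size_cat size_rcons /=.
          rewrite addnS /= oddD (negbTE Ho) addbF; by case: (odd (size x)).
        case: (vn u) => [|? ?]; lia.
      by rewrite addNr.
- have -> : (if vn u == [::] then 0 else sig x (take (size (vn u)).-1 (vn u))) = 0.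
    case: (vn u =P [::]) => // _; apply: sig_np; apply/negP => Hp'.
    by move: Hp; rewrite (prefix_trans Hp' (prefix_take _ _)).
  rewrite addr0 (@child_sum _ _ _ _ (last 0%N x) (rcons (vn u) (last 0%N x) == x)%:Z); last first.
    move=> a; case Hpa: (prefix x (rcons (vn u) a)).
      have Ex := prefix_rcons_not Hpa (negbT Hp).
      by rewrite Ex /sig prefix_refl drop_size last_rcons !eqxx.
    rewrite sig_np ?Hpa //; case: (a =P last 0%N x) => [Ea|] //.
    rewrite -Ea; case E: (rcons (vn u) a == x) => //.
    by move/eqP: E Hpa => ->; rewrite prefix_refl.
  case E: (rcons (vn u) (last 0%N x) == x).
    move/eqP: E => E; rewrite E Hx.
    have Hx0 : (x != [::]) by rewrite -E; case: (vn u).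
    have Hxu : take (size x).-1 x = vn u by rewrite -{2}E -{1}E size_rcons take_rcons_size.
    by rewrite Hx0 Hxu eqxx.
  rewrite (_ : (if _ then _ else _) = 0); last by case: ifP.
  suff -> : ((x != [::]) && (vn u == take (size x).-1 x)) = false by [].
  apply/negP => /andP [Hx0 /eqP Eu].
  move/negbT: E => /negP; apply; apply/eqP.
  rewrite Eu -seq_rcons_last //; by case: (x) Hx0.
Qed.

Definition sib0 (x : seq nat) := rcons (take (size x).-1 x) 0%N.
Definition wv (x y : seq nat) : int := sig x y - (if x == [::] then 0 else sig (sib0 x) y).

Lemma wv_adj d h (x : seq nat) (u : vertex d h) : (1 < d)%N -> vs d h x ->
  odd (size x) = odd h -> \sum_j wv x (vn j) * (adj u j)%:Z = 0.
Proof.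
move=> Hd Hx Hpar.
under eq_bigr do rewrite mulrBl.
rewrite sumrB sig_adj //.
case: (x =P [::]) => [->|Hx0] /=.
  by rewrite big1 ?subr0 // => j _; rewrite mul0r.
have Hsz : (0 < size x)%N by case: (x) Hx0.
have Hts : size (take (size x).-1 x) = (size x).-1.
  by rewrite size_take; case: (size x) Hsz => //= n _; rewrite ltnSn.
have Hs0 : vs d h (sib0 x).
  apply: vs_rcons; first exact: vs_take.
    rewrite Hts; case/and3P: Hx => H1 _ _; apply: leq_trans H1; by rewrite prednK.
  case: (take _ _) => [|? ?]; lia.
rewrite sig_adj //; last by rewrite /sib0 size_rcons Hts prednK.
rewrite /sib0 size_rcons /= take_rcons_size.
have -> : (rcons (take (size x).-1 x) 0%N != [::]) by case: (take _ _).
by rewrite subrr.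
Qed.

Lemma sig_F x y : (y == [::]) || (last 0%N y != 0%N) -> sig x y = (x == y)%:Z.
Proof.
move=> Hy; rewrite /sig; case: ifP => Hp; last first.
  by case: eqP => // E; move: Hp; rewrite E prefix_refl.
move/prefixP: Hp Hy => [s ->]; rewrite drop_size_cat //.
case: s => [|a s]; first by rewrite cats0 eqxx.
rewrite (_ : (x == x ++ a :: s) = false); last first.
  by apply/negbTE/eqP => /(congr1 size); rewrite size_cat /=; lia.
rewrite last_cat /= => Hy; apply/eqP; apply: contraT => Hg.
have := @gs_last (a :: s) Hg isT; rewrite /= => E.
by move: Hy; rewrite E eqxx orbF; case: (x).
Qed.

Lemma sig_F0 x y : (y == [::]) || (last 0%N y != 0%N) -> sig (sib0 x) y = 0.
Proof.
move=> Hy; rewrite /sig; case: ifP => // /prefixP [s Ey].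
move: Hy; rewrite Ey drop_size_cat //.
case: s Ey => [|a s] Ey.
  by rewrite cats0 /sib0 last_rcons; case: (take _ _).
rewrite last_cat /= => Hy; apply/eqP; apply: contraT => Hg.
have := @gs_last (a :: s) Hg isT; rewrite /= => E.
by move: Hy; rewrite E eqxx orbF /sib0; case: (take _ _).
Qed.

Lemma wv_F x y : (y == [::]) || (last 0%N y != 0%N) -> wv x y = (x == y)%:Z.
Proof.
by move=> Hy; rewrite /wv sig_F // sig_F0 // if_same subr0.
Qed.

Definition inF d h (v : vertex d h) : bool :=
  (odd (size (vn v)) == odd h) && ((vn v == [::]) || (last 0%N (vn v) != 0%N)).

Definition ev d h (v : vertex d h) : vertex d h -> int := fun j => (v == j)%:Z.

Lemma sum_delta d h (u : vertex d h) (f : vertex d h -> int) :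
  \sum_j f j * (u == j)%:Z = f u.
Proof.
rewrite (bigD1 u) //= eqxx mulr1 big1 ?addr0 // => j.
by rewrite eq_sym => /negbTE ->; rewrite mulr0.
Qed.

Lemma phi_delta d h (v u : vertex d h) : (1 < d)%N -> inF v ->
  \sum_j wv (vn v) (vn j) * delta u j = d%:Z * wv (vn v) (vn u).
Proof.
move=> Hd /andP [/eqP Hp _].
rewrite /delta.
under eq_bigr do rewrite mulrBr mulrCA.
rewrite sumrB -big_distrr /= sum_delta.
rewrite (@wv_adj d h) ?subr0 //; exact: vn_vs.
Qed.

Lemma intr_natE (R : pzRingType) (n : nat) : ((n%:Z)%:~R : R) = n%:R.
Proof. by []. Qed.

Lemma lower d h r : (1 < d)%N -> sandpile_generated_by d h r ->
  (#|[set v : vertex d h | inF v]| <= r)%N.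
Proof.
move=> Hd [g Hg].
set FS := [set v : vertex d h | inF v].
set n := #|FS|.
pose p := pdiv d.
have pP : prime p := pdiv_prime Hd.
have Hd0 : (d%:R : 'F_p) = 0.
  by apply/eqP; rewrite -(dvdn_pcharf (pchar_Fp pP)); exact: pdiv_dvd.
pose e (k : 'I_n) : vertex d h := enum_val k.
have He : forall k, inF (e k) by move=> k; have := enum_valP k; rewrite inE.
have H : forall k : 'I_n, exists c : 'I_r -> int, exists l : vertex d h -> int,
    forall j, ev (e k) j = \sum_(i < r) c i * g i j + \sum_u l u * delta u j.
  by move=> k; exact: Hg.
have [c Hc] := fin_all_exists H.
have [l Hl] := fin_all_exists Hc.
pose phi (k' : 'I_n) (z : vertex d h -> int) := \sum_j wv (vn (e k')) (vn j) * z j.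
have key : forall k k', (k' == k)%:Z =
    \sum_i c k i * phi k' (g i) + d%:Z * \sum_u l k u * wv (vn (e k')) (vn u).
  move=> k k'.
  have E1 : phi k' (ev (e k)) = (k' == k)%:Z.
    rewrite /phi /ev.
    rewrite sum_delta wv_F; last by case/andP: (He k).
    by rewrite (inj_eq (@vn_inj d h)) (inj_eq enum_val_inj).
  rewrite -E1 /phi.
  under eq_bigr do rewrite Hl mulrDr !big_distrr /=.
  rewrite big_split /=; congr (_ + _).
  - rewrite exchange_big; apply: eq_bigr => i _; rewrite big_distrr /=.
    by apply: eq_bigr => j _; rewrite mulrCA.
  - rewrite exchange_big big_distrr /=; apply: eq_bigr => u _.
    rewrite mulrCA -phi_delta //; rewrite big_distrr /=.
    by apply: eq_bigr => j _; rewrite mulrCA.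
pose C : 'M['F_p]_(n, r) := \matrix_(k, i) (c k i)%:~R.
pose Phi : 'M['F_p]_(r, n) := \matrix_(i, k') (phi k' (g i))%:~R.
have CP : C *m Phi = 1%:M.
  apply/matrixP => k k'; rewrite !mxE.
  under eq_bigr do rewrite !mxE.
  have := congr1 (fun z : int => (z%:~R : 'F_p)) (key k k').
  rewrite /= intrD intrM !intr_natE Hd0 mul0r addr0 rmorph_sum /=.
  under eq_bigr do rewrite intrM.
  move=> <-.
  by rewrite eq_sym.
have := mxrankM_maxr C Phi; rewrite CP mxrank1 => /leq_trans; apply.
exact: rank_leq_row.
Qed.

Definition Sp d h r (g : 'I_r -> vertex d h -> int) (x : vertex d h -> int) : Prop :=
  exists (c : 'I_r -> int) (l : vertex d h -> int),
    forall j, x j = \sum_(i < r) c i * g i j + \sum_u l u * delta u j.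

Lemma Sp_ext d h r g (x y : vertex d h -> int) :
  (forall j, x j = y j) -> @Sp d h r g x -> Sp g y.
Proof. by move=> E [c [l H]]; exists c, l => j; rewrite -E. Qed.

Lemma Sp_zero d h r g : @Sp d h r g (fun _ => 0).
Proof.
exists (fun _ => 0), (fun _ => 0) => j.
by rewrite !big1 ?addr0 // => *; rewrite mul0r.
Qed.

Lemma Sp_add d h r g (x y : vertex d h -> int) :
  @Sp d h r g x -> Sp g y -> Sp g (fun j => x j + y j).
Proof.
move=> [c1 [l1 H1]] [c2 [l2 H2]].
exists (fun i => c1 i + c2 i), (fun u => l1 u + l2 u) => j.
rewrite H1 H2.
under [X in _ = X + _]eq_bigr do rewrite mulrDl.
under [X in _ = _ + X]eq_bigr do rewrite mulrDl.
rewrite !big_split /=; ring.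
Qed.

Lemma Sp_scale d h r g (a : int) (x : vertex d h -> int) :
  @Sp d h r g x -> Sp g (fun j => a * x j).
Proof.
move=> [c [l H]]; exists (fun i => a * c i), (fun u => a * l u) => j.
rewrite H mulrDr !big_distrr /=.
by congr (_ + _); apply: eq_bigr => i _; rewrite mulrA.
Qed.

Lemma Sp_opp d h r g (x : vertex d h -> int) :
  @Sp d h r g x -> Sp g (fun j => - x j).
Proof.
move=> /(Sp_scale (-1)); apply: Sp_ext => j; by rewrite mulN1r.
Qed.

Lemma Sp_sum d h r g (I : eqType) (s : seq I) (P : pred I) (f : I -> vertex d h -> int) :
  (forall i, P i -> @Sp d h r g (f i)) -> Sp g (fun j => \sum_(i <- s | P i) f i j).
Proof.
move=> Hf; elim: s => [|a s IH].
  by apply: Sp_ext (Sp_zero g) => j; rewrite big_nil.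
case Pa: (P a).
  apply: Sp_ext (Sp_add (Hf a Pa) IH) => j; by rewrite big_cons Pa.
by apply: Sp_ext IH => j; rewrite big_cons Pa.
Qed.

Lemma Sp_delta d h r g (u : vertex d h) : @Sp d h r g (delta u).
Proof.
exists (fun _ => 0), (fun w => (w == u)%:Z) => j.
rewrite big1 ?add0r; last by move=> *; rewrite mul0r.
rewrite (bigD1 u) //= eqxx mul1r big1 ?addr0 // => w /negbTE ->; by rewrite mul0r.
Qed.

Lemma Sp_g d h r g (i : 'I_r) : @Sp d h r g (g i).
Proof.
exists (fun i' => (i' == i)%:Z), (fun _ => 0) => j.
rewrite [X in _ = _ + X]big1 ?addr0; last by move=> *; rewrite mul0r.
rewrite (bigD1 i) //= eqxx mul1r big1 ?addr0 // => w /negbTE ->; by rewrite mul0r.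
Qed.

Lemma adj_sym d h (u v : vertex d h) : adj u v = adj v u.
Proof. by rewrite /adj orbC. Qed.

Lemma sum_adj_ev d h (u y k : vertex d h) : adj u y ->
  \sum_(j | adj u j && (j != y)) ev j k = (adj u k)%:Z - (y == k)%:Z.
Proof.
move=> Huy.
have E : \sum_(j | adj u j) ev j k = (adj u k)%:Z.
  case Hk: (adj u k).
    rewrite (bigD1 k) //= /ev eqxx big1 ?addr0 // => j /andP [_ /negbTE ->] //.
  rewrite big1 // => j Hj; rewrite /ev; case: eqP => // E; by move: Hj; rewrite E Hk.
by rewrite -E [X in _ = X - _](bigD1 y) //= /ev addrC addrK.
Qed.

Lemma Sp_elim d h r g (u y : vertex d h) : adj u y -> @Sp d h r g (ev u) ->
  (forall j, adj u j -> j != y -> Sp g (ev j)) -> Sp g (ev y).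
Proof.
move=> Huy Hu Hj.
have S1 := Sp_scale d%:Z Hu.
have S2 := Sp_opp (@Sp_delta d h r g u).
have HH : forall j, adj u j && (j != y) -> Sp g (ev j).
  by move=> j /andP [H1 H2]; exact: Hj.
have S3 := Sp_opp (@Sp_sum d h r g _ (index_enum (vertex d h)) (fun j => adj u j && (j != y)) (@ev d h) HH).
apply: Sp_ext (Sp_add (Sp_add S1 S2) S3) => k /=.
rewrite sum_adj_ev // /delta /ev; ring.
Qed.

Lemma vn_size d h (v : vertex d h) : (size (vn v) <= h)%N.
Proof. by case/and3P: (vn_vs v). Qed.

Lemma SpA d h r g : (2 < d)%N -> (forall v, inF v -> @Sp d h r g (ev v)) ->
  forall m (q : vertex d h), (h - size (vn q) <= m)%N ->
  odd (size (vn q)) != odd h -> Sp g (ev q).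
Proof.
move=> Hd HF; elim=> [|m IH] q Hm Hpar.
  have := vn_size q => Hs.
  have Eh : size (vn q) = h by lia.
  by move: Hpar; rewrite Eh eqxx.
have Hsq : (size (vn q) < h)%N.
  rewrite ltn_neqAle vn_size andbT; apply/eqP => E; by move: Hpar; rewrite E eqxx.
have Hvs : vs d h (rcons (vn q) 1%N).
  apply: vs_rcons (vn_vs q) Hsq _; case: (vn q) => [|? ?]; lia.
pose v := mkv d h (rcons (vn q) 1%N).
have Hv : vn v = rcons (vn q) 1%N := mkvK Hvs.
have Fv : inF v.
  rewrite /inF Hv size_rcons last_rcons /= orbT andbT.
  by move: Hpar; case: (odd _); case: (odd h).
have Cqv : is_child q v by rewrite is_childE Hv size_rcons eqxx take_rcons_size eqxx.
apply: (@Sp_elim d h r g v q); [by rewrite /adj Cqv orbT | exact: HF | ].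
move=> j; rewrite /adj => /orP [Cj|Cj] Hjq.
- move: Cj; rewrite is_childE Hv size_rcons => /andP [/eqP Hs _].
  apply: IH; first by rewrite Hs; lia.
  by rewrite Hs /= negbK.
- move: Cj; rewrite is_childE Hv size_rcons => /andP [/eqP Hs /eqP Ht].
  case/eqP: Hjq; apply: vn_inj; rewrite -Ht.
  have -> : size (vn j) = size (vn q) by case: Hs.
  exact: take_rcons_size.
Qed.

Lemma SpB d h r g : (2 < d)%N -> (forall v, inF v -> @Sp d h r g (ev v)) ->
  forall m (y : vertex d h), (size (vn y) <= m)%N ->
  odd (size (vn y)) = odd h -> Sp g (ev y).
Proof.
move=> Hd HF; elim=> [|m IH] y Hm Hpar.
  apply: HF; rewrite /inF Hpar eqxx /=.
  by move: Hm; rewrite leqn0 size_eq0 => ->.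
case Fy: (inF y); first exact: HF.
move: Fy; rewrite /inF Hpar eqxx /= => /norP [Hy0 /negbNE /eqP Hl].
have Hsz : (0 < size (vn y))%N by case: (vn y) Hy0.
pose q := mkv d h (take (size (vn y)).-1 (vn y)).
have Hq : vn q = take (size (vn y)).-1 (vn y) by apply: mkvK; apply: vs_take; exact: vn_vs.
have Hqs : size (vn q) = (size (vn y)).-1.
  by rewrite Hq size_take; case: (size (vn y)) Hsz => //= n _; rewrite ltnSn.
have Cqy : is_child q y by rewrite is_childE Hqs (prednK Hsz) eqxx Hq eqxx.
have Ey : vn y = rcons (vn q) 0%N.
  by rewrite Hq -Hl -seq_rcons_last // prednK.
apply: (@Sp_elim d h r g q y); first by rewrite /adj Cqy.
  apply: (@SpA d h r g Hd HF h); first exact: leq_subr.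
  rewrite Hqs; move: Hpar; case: (size (vn y)) Hsz => //= n _ <-.
  by case: (odd n).
move=> j; rewrite /adj => /orP [Cj|Cj] Hjy.
- have Ej := child_vn Cj.
  case: (last 0%N (vn j) =P 0%N) => [E0|Hn0].
    by case/eqP: Hjy; apply: vn_inj; rewrite Ej E0 Ey.
  apply: HF; rewrite /inF Ej size_rcons Hqs (prednK Hsz) Hpar eqxx /= last_rcons.
  by apply/orP; right; apply/eqP.
- move: Cj; rewrite is_childE Hqs => /andP [/eqP Hs _].
  apply: IH; first by lia.
  by rewrite -Hpar; case: (size (vn y)) Hs Hsz => [|[|n]] //= [->]; rewrite negbK.
Qed.

Lemma upper d h : (2 < d)%N -> sandpile_generated_by d h #|[set v : vertex d h | inF v]|.
Proof.
move=> Hd; set FS := [set v : vertex d h | inF v].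
pose g (k : 'I_#|FS|) := ev (enum_val k).
exists g.
have HF : forall v, inF v -> Sp g (ev v).
  move=> v Fv; have Hv : v \in FS by rewrite inE.
  have := Sp_g g (enum_rank_in Hv v); by rewrite /g enum_rankK_in.
have Hall : forall v, Sp g (ev v).
  move=> v; case: (boolP (odd (size (vn v)) == odd h)) => Hp.
  - exact: (SpB Hd HF (leqnn _) (eqP Hp)).
  - exact: (SpA Hd HF (leqnn _) Hp).
move=> x.
have HH : forall v, predT v -> Sp g (fun j => x v * ev v j).
  by move=> v _; exact: Sp_scale.
have := @Sp_sum d h _ g _ (index_enum (vertex d h)) predT _ HH.
apply: Sp_ext => j.
rewrite /ev.
under eq_bigr do rewrite eq_sym.
by rewrite sum_delta.
Qed.

Local Close Scope ring_scope.

Lemma card_letters d m (Q : pred nat) : m <= d ->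
  #|[set a : 'I_d | (a < m) && Q a]| = count Q (iota 0 m).
Proof.
move=> Hm; rewrite -sum1_card.
rewrite (eq_bigl (fun a : 'I_d => (a < m) && Q a)); last by move=> a; rewrite inE.
have -> : \sum_(a < d | (a < m) && Q a) 1 = \sum_(0 <= a < d | (a < m) && Q a) 1.
  by rewrite big_mkord.
rewrite sum1_count /index_iota subn0.
rewrite -(subnKC Hm) iotaD count_cat add0n.
rewrite (@eq_in_count _ _ Q (iota 0 m)); last first.
  by move=> x; rewrite mem_iota add0n /= => ->.
rewrite (@eq_in_count _ _ pred0 (iota m _)); last first.
  by move=> x; rewrite mem_iota => /andP [Hx _]; rewrite ltnNge Hx.
by rewrite count_pred0 addn0.
Qed.

Lemma count_iota_true m : count predT (iota 0 m) = m.
Proof. by rewrite count_predT size_iota. Qed.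

Lemma count_iota_nz m : count (fun a => a != 0) (iota 0 m) = m.-1.
Proof.
case: m => [|m] //=; rewrite (@eq_in_count _ _ predT); first by rewrite count_predT size_iota.
by move=> x; rewrite mem_iota => /andP [Hx _]; rewrite -lt0n.
Qed.

Definition bnd d (t : nat) := if t == 0 then d else d.-1.

Lemma vs_rcons_inv d h s l : vs d h (rcons s l) -> l < bnd d (size s).
Proof.
rewrite /bnd; case: s => [|b s] /and3P [_ H2 H3] /=; first by move: H2 => /= /andP [].
by move: H3; rewrite /= -cats1 all_cat /= andbT => /andP [].
Qed.

Lemma vs_rcons' d h s a : vs d h s -> size s < h -> a < bnd d (size s) -> vs d h (rcons s a).
Proof. by move=> H1 H2; rewrite /bnd; case: s H1 H2 => [|b s] H1 H2 H3; apply: vs_rcons. Qed.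

Lemma card_children d h (u : vertex d h) (Q : pred nat) : size (vn u) < h ->
  #|[set j : vertex d h | is_child u j && Q (last 0 (vn j))]| =
  count Q (iota 0 (bnd d (size (vn u)))).
Proof.
move=> Hu.
have Hb : bnd d (size (vn u)) <= d by rewrite /bnd; case: eqP => // _; exact: leq_pred.
rewrite -(card_letters Q Hb).
set A := [set a : 'I_d | _].
have HvA : forall a : 'I_d, a \in A -> vs d h (rcons (vn u) a).
  by move=> a; rewrite inE => /andP [Ha _]; apply: vs_rcons' => //; exact: vn_vs.
rewrite -(@card_in_imset _ _ (fun a : 'I_d => mkv d h (rcons (vn u) a))); last first.
  move=> a b Ha Hb' /(congr1 (@vn d h)); rewrite !mkvK ?HvA //.
  by move=> E; apply: val_inj; case/rcons_inj: E.
apply: eq_card => j; rewrite inE.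
apply/idP/imsetP.
- move=> /andP [Cj Qj]; have Ej := child_vn Cj.
  have Hl : last 0 (vn j) < bnd d (size (vn u)) by apply: (@vs_rcons_inv d h); rewrite -Ej; exact: vn_vs.
  have Hld : last 0 (vn j) < d by exact: leq_trans Hl Hb.
  exists (Ordinal Hld); first by rewrite inE /= Hl.
  apply: vn_inj; rewrite mkvK /= -?Ej //; exact: vn_vs.
- move=> [a Ha ->]; have Hv := mkvK (HvA a Ha).
  move: Ha; rewrite inE => /andP [_ Qa].
  by rewrite is_childE Hv size_rcons eqxx take_rcons_size eqxx last_rcons.
Qed.

Definition Lset d h t := [set v : vertex d h | size (vn v) == t].

Lemma dcount d h t (P : pred (vertex d h)) : t < h ->
  #|[set j : vertex d h | (size (vn j) == t.+1) && P j]| =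
  \sum_(u in Lset d h t) #|[set j | is_child u j && P j]|.
Proof.
move=> Ht; rewrite -sum1_card.
pose par (j : vertex d h) := mkv d h (take (size (vn j)).-1 (vn j)).
have Hpar : forall j, vn (par j) = take (size (vn j)).-1 (vn j).
  by move=> j; apply: mkvK; apply: vs_take; exact: vn_vs.
rewrite (partition_big par (fun u => u \in Lset d h t)) /=; last first.
  move=> j; rewrite !inE => /andP [/eqP Hj _]; rewrite Hpar size_take Hj /= ltnSn //.
apply: eq_bigr => u; rewrite inE => /eqP Hu; rewrite -sum1_card; apply: eq_bigl => j.
rewrite !inE; apply/idP/idP.
- move=> /andP [/andP [/eqP Hs Pj] /eqP Hp]; rewrite Pj andbT -Hp is_childE Hpar Hs /=.
  by rewrite size_take Hs ltnSn eqxx eqxx.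
- move=> /andP [Cj Pj]; move: (Cj); rewrite is_childE => /andP [/eqP Hs /eqP Htk].
  rewrite Hs Hu eqxx Pj /=; apply/eqP; apply: vn_inj; by rewrite Hpar Hs /= Hu -Hu.
Qed.

Lemma cL_succ d h t : t < h -> #|Lset d h t.+1| = #|Lset d h t| * bnd d t.
Proof.
move=> Ht.
have -> : #|Lset d h t.+1| = #|[set j : vertex d h | (size (vn j) == t.+1) && predT j]|.
  by apply: eq_card => j; rewrite !inE andbT.
rewrite dcount // -sum_nat_const; apply: eq_bigr => u; rewrite inE => /eqP Hu.
have -> : #|[set j | is_child u j && predT j]| =
          #|[set j : vertex d h | is_child u j && predT (last 0 (vn j))]|.
  by apply: eq_card => j; rewrite !inE.
by rewrite card_children Hu // count_iota_true.
Qed.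

Lemma cF_succ d h t : t < h ->
  #|[set j : vertex d h | (size (vn j) == t.+1) && (last 0 (vn j) != 0)]| =
  #|Lset d h t| * (bnd d t).-1.
Proof.
move=> Ht.
rewrite dcount // -sum_nat_const; apply: eq_bigr => u; rewrite inE => /eqP Hu.
by rewrite (card_children (fun a => a != 0)) Hu // count_iota_nz.
Qed.

Lemma cL0 d h : #|Lset d h 0| = 1.
Proof.
rewrite -(cards1 (root d h)); apply: eq_card => v; rewrite !inE size_eq0.
apply/eqP/eqP => [E|->] //; apply: vn_inj; by rewrite E.
Qed.

Lemma cL_formula d h t : t <= h ->
  #|Lset d h t| = if t == 0 then 1 else d * (d.-1) ^ t.-1.
Proof.
elim: t => [|t IH] Ht; first exact: cL0.
rewrite cL_succ // IH ?(ltnW Ht) // /bnd.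
case: t {IH Ht} => [|t] //=; first by rewrite mul1n muln1.
by rewrite expnSr mulnA.
Qed.

Definition fterm d h (t : nat) :=
  (odd t == odd h) * (if t == 0 then 1 else #|Lset d h t.-1| * (bnd d t.-1).-1).

Lemma cFS d h : #|[set v : vertex d h | inF v]| = \sum_(t < h.+1) fterm d h t.
Proof.
rewrite -sum1_card (partition_big (fun j : vertex d h => (inord (size (vn j)) : 'I_h.+1)) xpredT) //=.
apply: eq_bigr => t _.
have -> : \sum_(j in [set v : vertex d h | inF v] | inord (size (vn j)) == t) 1 =
          #|[set j : vertex d h | inF j && (size (vn j) == t)]|.
  rewrite -sum1_card; apply: eq_bigl => j; rewrite !inE; congr (_ && _).
  by rewrite -val_eqE /= inordK // ltnS vn_size.
rewrite /fterm.
case Hp: (odd t == odd h); last first.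
  rewrite mul0n; apply/eqP; rewrite cards_eq0; apply/eqP/setP => j; rewrite !inE /inF.
  by case: (size (vn j) =P t) => [->|]; rewrite ?Hp ?andbF.
rewrite [true * _]mul1n.
have Ht : t <= h by rewrite -ltnS.
case: (nat_of_ord t) Hp Ht => [|s] Hp Ht.
  rewrite [_ == 0]eqxx -(cL0 d h); apply: eq_card => j; rewrite !inE /inF.
  case: (size (vn j) =P 0) => [E|_]; last by rewrite andbF.
  have -> : vn j == [::] by rewrite -size_eq0 E.
  by rewrite E Hp.
rewrite /= -cF_succ //; apply: eq_card => j; rewrite !inE /inF.
case: (size (vn j) =P s.+1) => [E|_]; last by rewrite !andbF.
have -> : (vn j == [::]) = false by rewrite -size_eq0 E.
by rewrite E Hp andbT.
Qed.

Definition ff d t := if t == 0 then 1 else (if t.-1 == 0 then 1 else d * (d.-1) ^ t.-2) * (bnd d t.-1).-1.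

Lemma sum_ff d m : 1 < d -> \sum_(t < m.+1) (odd t == odd m) * ff d t = (d.-1) ^ m.
Proof.
move=> Hd.
suff : forall n, (\sum_(t < n.+1) (odd t == odd n) * ff d t = (d.-1) ^ n) /\
                 (\sum_(t < n.+2) (odd t == odd n.+1) * ff d t = (d.-1) ^ n.+1).
  by move=> H; case: (H m).
clear m; elim=> [|m [IH0 IH1]].
  split; first by rewrite big_ord_recr big_ord0.
  by rewrite !big_ord_recr big_ord0 /= /ff /bnd /= add0n mul0n add0n !mul1n expn1.
split=> //.
rewrite big_ord_recr /= big_ord_recr /= negbK IH0 eqxx.
have -> : (~~ odd m == odd m) = false by case: (odd m).
rewrite /ff /bnd /=.
case: d Hd {IH0 IH1} => [|[|e]] // _ /=.
rewrite !expnS; ring.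
Qed.

Lemma card_FS d h : 1 < d -> #|[set v : vertex d h | inF v]| = (d.-1) ^ h.
Proof.
move=> Hd; rewrite cFS -(sum_ff h Hd); apply: eq_bigr => t _.
rewrite /fterm /ff cL_formula //.
have := ltn_ord t; lia.
Qed.

Unset Implicit Arguments.

Theorem theorem2p1 (d h : nat) :
  (3 <= d)%N -> (1 <= h)%N -> sandpile_rank_is d h ((d - 1) ^ h)%N.
Proof.
move=> Hd _.
have Hd1 : (1 < d)%N by apply: leq_trans Hd.
rewrite subn1 -(card_FS h Hd1); split.
  exact: upper.
by move=> r Hr; exact: lower.
Qed.
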